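(* Let $L$ be a finite-dimensional Lie algebra over a field $F$ and let $A_1/B_1$, $A_2/B_2$ be chief factors of $L$. Then (i) if $A_1/B_1$ and $A_2/B_2$ are $L$-isomorphic, then $C_L(A_1/B_1) = C_L(A_2/B_2)$; (ii) if $A_1/B_1$ and $A_2/B_2$ are non-abelian, then they are $L$-isomorphic if and only if $C_L(A_1/B_1) = C_L(A_2/B_2)$.
   Context: A chief factor of $L$ is a quotient $A/B$ of ideals $B \subsetneq A$ of $L$ with no ideal of $L$ strictly between $B$ and $A$. Two chief factors are $L$-isomorphic if they are isomorphic as $L$-modules (under the induced adjoint action). The centraliser of a chief factor is $C_L(A/B) = \{x \in L : [x,A] \subseteq B\}$. *)

(* Defs.v *)
(* finite-dimensional Lie algebras over a field F are modelled
   as a vectType F (finite-dimensional F-vector space) equipped with a bracket. *)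
From HB Require Import structures.
From mathcomp Require Import all_boot all_order all_algebra.
Set Implicit Arguments. Unset Strict Implicit. Unset Printing Implicit Defensive.
Import GRing.Theory.
Local Open Scope ring_scope.

Section Lie.
Variables (F : fieldType) (L : vectType F) (br : L -> L -> L).

Record lie_algebra : Prop := LieAlgebra {
  lie_linl : forall (c : F) (x y z : L), br (c *: x + y) z = c *: br x z + br y z;
  lie_linr : forall (c : F) (x y z : L), br z (c *: x + y) = c *: br z x + br z y;
  lie_alt  : forall x : L, br x x = 0;
  lie_jacobi : forall x y z : L,
      br x (br y z) + br y (br z x) + br z (br x y) = 0
}.

Definition lie_ideal (I : {vspace L}) : Prop :=
  forall x y : L, y \in I -> br x y \in I.

Definition chief_factor (A B : {vspace L}) : Prop :=
  [/\ lie_ideal A, lie_ideal B, (B <= A)%VS, B != A &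
      forall C : {vspace L}, lie_ideal C -> (B <= C)%VS -> (C <= A)%VS ->
        C = B \/ C = A].

Definition centraliser (A B : {vspace L}) : L -> Prop :=
  fun x => forall a : L, a \in A -> br x a \in B.

Definition nonabelian_factor (A B : {vspace L}) : Prop :=
  exists a b : L, [/\ a \in A, b \in A & br a b \notin B].

(* An F-linear map A1/B1 -> A2/B2 is the same as one induced by a
   linear map f : L -> L with f(A1) ⊆ A2 and f(B1) ⊆ B2; it is injective iff
   f^{-1}(B2) ∩ A1 ⊆ B1, surjective iff f(A1) + B2 = A2, and an L-module map iff
   f([x,a]) - [x,f(a)] ∈ B2 for all x ∈ L, a ∈ A1. *)
Definition L_isomorphic (A1 B1 A2 B2 : {vspace L}) : Prop :=
  exists f : 'End(L),
    [/\ (f @: A1 <= A2)%VS,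
        forall a : L, a \in A1 -> (f a \in B2) = (a \in B1),
        (f @: A1 + B2)%VS = A2 &
        forall x a : L, a \in A1 -> f (br x a) - br x (f a) \in B2].

End Lie.

(* Main.v *)
Require Import Defs.
From HB Require Import structures.
From mathcomp Require Import all_boot all_order all_algebra.
From Stdlib Require Import FunctionalExtensionality PropExtensionality.
Set Implicit Arguments. Unset Strict Implicit. Unset Printing Implicit Defensive.
Import GRing.Theory.
Local Open Scope ring_scope.

Lemma lin_l (F : fieldType) (L : vectType F) (br : L -> L -> L)
  (HL : lie_algebra br) (a : L) : linear (fun x => br x a).
Proof. by move=> c x y; rewrite (lie_linl HL). Qed.
Lemma lin_r (F : fieldType) (L : vectType F) (br : L -> L -> L)
  (HL : lie_algebra br) (a : L) : linear (fun x => br a x).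
Proof. by move=> c x y; rewrite (lie_linr HL). Qed.

Definition brL (F : fieldType) (L : vectType F) (br : L -> L -> L)
  (HL : lie_algebra br) (a : L) : {linear L -> L} :=
  HB.pack (fun x => br x a) (GRing.isLinear.Build _ _ _ _ _ (lin_l HL a)).
Definition brR (F : fieldType) (L : vectType F) (br : L -> L -> L)
  (HL : lie_algebra br) (a : L) : {linear L -> L} :=
  HB.pack (fun x => br a x) (GRing.isLinear.Build _ _ _ _ _ (lin_r HL a)).

Lemma br_anti (F : fieldType) (L : vectType F) (br : L -> L -> L)
  (HL : lie_algebra br) x y : br x y = - br y x.
Proof.
have := lie_alt HL (x + y).
have E1 u v w : br (u + v) w = br u w + br v w by exact: (linearD (brL HL w)).
have E2 u v w : br w (u + v) = br w u + br w v by exact: (linearD (brR HL w)).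
rewrite E1 !E2 !(lie_alt HL) add0r addr0 => /eqP; rewrite addr_eq0 => /eqP.
done.
Qed.

Definition Cv (F : fieldType) (L : vectType F) (br : L -> L -> L)
  (HL : lie_algebra br) (A B : {vspace L}) : {vspace L} :=
  (\bigcap_(i < \dim A) (linfun (brL HL (vbasis A)`_i) @^-1: B))%VS.

Lemma memCv (F : fieldType) (L : vectType F) (br : L -> L -> L)
  (HL : lie_algebra br) (A B : {vspace L}) x :
  (x \in Cv HL A B) <-> centraliser br A B x.
Proof.
rewrite /Cv memvE; split.
  move/subv_bigcapP => H a Aa.
  rewrite (coord_vbasis Aa).
  rewrite -[br x _]/(brR HL x _) linear_sum /=.
  apply: memv_suml => i _.
  rewrite -[br x _]/(brR HL x _) linearZ /=; apply: memvZ.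
  have := H i isT; rewrite -memvE -memv_preim lfunE /=.
  done.
move=> Hc; apply/subv_bigcapP => i _.
rewrite -memvE -memv_preim lfunE /=; apply: Hc.
apply: vbasis_mem; apply: mem_nth.
by rewrite size_tuple.
Qed.

Lemma ideal_Cv (F : fieldType) (L : vectType F) (br : L -> L -> L)
  (HL : lie_algebra br) (A B : {vspace L}) :
  lie_ideal br A -> lie_ideal br B -> lie_ideal br (Cv HL A B).
Proof.
move=> IA IB x y /memCv Hy; apply/memCv => a Aa.
have J := lie_jacobi HL a x y.
have -> : br (br x y) a = br x (br y a) + br y (br a x).
  rewrite (br_anti HL (br x y)); move: J; rewrite -addrA => /eqP.
  by rewrite addr_eq0 => /eqP ->; rewrite opprK.
apply: memvD; first exact/IB/Hy.
apply: Hy; rewrite (br_anti HL a x); rewrite memvN; exact: IA.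
Qed.

Lemma B_sub_Cv (F : fieldType) (L : vectType F) (br : L -> L -> L)
  (HL : lie_algebra br) (A B : {vspace L}) :
  lie_ideal br B -> (B <= Cv HL A B)%VS.
Proof.
move=> IB; apply/subvP => b Bb; apply/memCv => a Aa.
rewrite (br_anti HL); rewrite memvN; exact: IB.
Qed.

Lemma ideal_cap (F : fieldType) (L : vectType F) (br : L -> L -> L)
  (U V : {vspace L}) :
  lie_ideal br U -> lie_ideal br V -> lie_ideal br (U :&: V)%VS.
Proof.
move=> IU IV x y /memv_capP [Uy Vy]; apply/memv_capP; split; [exact: IU|exact: IV].
Qed.

Lemma ideal_add (F : fieldType) (L : vectType F) (br : L -> L -> L)
  (HL : lie_algebra br) (U V : {vspace L}) :
  lie_ideal br U -> lie_ideal br V -> lie_ideal br (U + V)%VS.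
Proof.
move=> IU IV x y /memv_addP [u Uu [v Vv ->]].
rewrite -[br x _]/(brR HL x _) linearD /=.
apply: memv_add; [exact: IU|exact: IV].
Qed.

Lemma capCv (F : fieldType) (L : vectType F) (br : L -> L -> L)
  (HL : lie_algebra br) (A B : {vspace L}) :
  chief_factor br A B -> nonabelian_factor br A B ->
  (A :&: Cv HL A B)%VS = B.
Proof.
move=> [IA IB sBA nBA Hmin] [a [b [Aa Ab nab]]].
have sB : (B <= A :&: Cv HL A B)%VS.
  by rewrite subv_cap sBA (@B_sub_Cv _ _ _ HL A _ IB).
have [//|E] := Hmin (A :&: Cv HL A B)%VS (ideal_cap IA (ideal_Cv (HL:=HL) IA IB))
  sB (capvSl _ _).
exfalso; move/negP: nab; apply.
have : a \in (A :&: Cv HL A B)%VS by rewrite E.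
by move/memv_capP => [_ /memCv H]; apply: H.
Qed.

Lemma CvE (F : fieldType) (L : vectType F) (br : L -> L -> L)
  (HL : lie_algebra br) (A1 B1 A2 B2 : {vspace L}) :
  (forall x, centraliser br A1 B1 x <-> centraliser br A2 B2 x) ->
  Cv HL A1 B1 = Cv HL A2 B2.
Proof.
move=> H; apply/vspaceP => x; apply/idP/idP => /memCv Hx; apply/memCv; exact/H.
Qed.

Lemma sub_sum (F : fieldType) (L : vectType F) (br : L -> L -> L)
  (HL : lie_algebra br) (A1 B1 A2 B2 : {vspace L}) :
  chief_factor br A1 B1 -> chief_factor br A2 B2 ->
  nonabelian_factor br A2 B2 ->
  Cv HL A1 B1 = Cv HL A2 B2 ->
  (A1 <= A2 + Cv HL A1 B1)%VS.
Proof.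
move=> [IA1 IB1 sBA1 nBA1 Hmin1] H2 N2 E.
have C2 := capCv HL H2 N2.
case: H2 => IA2 IB2 sBA2 nBA2 _.
have IC := ideal_Cv (HL:=HL) IA1 IB1.
have sB : (B1 <= A1 :&: (A2 + Cv HL A1 B1))%VS.
  rewrite subv_cap sBA1 /=; apply: subv_trans (addvSr _ _).
  exact: (@B_sub_Cv _ _ _ HL A1 _ IB1).
have [E1|E1] := Hmin1 _ (ideal_cap IA1 (ideal_add HL IA2 IC)) sB (capvSl _ _);
  last by rewrite -{1}E1 capvSr.
exfalso; move/negP: nBA2; apply; apply/eqP.
rewrite -C2; apply/capv_idPl.
apply/subvP => y Ay; rewrite -E; apply/memCv => a Aa.
rewrite -E1; apply/memv_capP; split; first exact: IA1.
apply: (subvP (addvSl _ _)); rewrite (br_anti HL) memvN; exact: IA2.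
Qed.

Lemma iso_cent (F : fieldType) (L : vectType F) (br : L -> L -> L)
  (HL : lie_algebra br) (A1 B1 A2 B2 : {vspace L}) :
  chief_factor br A1 B1 -> chief_factor br A2 B2 ->
  L_isomorphic br A1 B1 A2 B2 ->
  forall x, centraliser br A1 B1 x <-> centraliser br A2 B2 x.
Proof.
move=> [IA1 IB1 sBA1 _ _] [IA2 IB2 sBA2 _ _] [f [Hsub Hinj Hsurj Hmod]] x.
have brD u v : br x (u + v) = br x u + br x v by exact: (linearD (brR HL x)).
split=> Hx a Ha.
  move: Ha; rewrite -Hsurj => /memv_addP [u /memv_imgP [a1 Ha1 ->] [b Hb ->]].
  rewrite brD; apply: memvD; last exact: IB2.
  have Xa : br x a1 \in A1 by exact: IA1.
  have -> : br x (f a1) = f (br x a1) - (f (br x a1) - br x (f a1)).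
    by rewrite opprB addrCA subrr addr0.
  apply: memvB; last exact: Hmod.
  by rewrite Hinj // Hx.
have Xa : br x a \in A1 by exact: IA1.
rewrite -Hinj //.
have -> : f (br x a) = (f (br x a) - br x (f a)) + br x (f a) by rewrite subrK.
apply: memvD; first exact: Hmod.
apply: Hx; apply: (subvP Hsub); exact: memv_img.
Qed.

Lemma cent_iso (F : fieldType) (L : vectType F) (br : L -> L -> L)
  (HL : lie_algebra br) (A1 B1 A2 B2 : {vspace L}) :
  chief_factor br A1 B1 -> chief_factor br A2 B2 ->
  nonabelian_factor br A1 B1 -> nonabelian_factor br A2 B2 ->
  (forall x, centraliser br A1 B1 x <-> centraliser br A2 B2 x) ->
  L_isomorphic br A1 B1 A2 B2.
Proof.
move=> H1 H2 N1 N2 Hc.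
have E := CvE HL Hc.
have S12 := sub_sum H1 H2 N2 E.
have S21 := sub_sum H2 H1 N1 (esym E).
have C1 := capCv HL H1 N1.
have C2 := capCv HL H2 N2.
rewrite -E in S21 C2.
set C := Cv HL A1 B1 in S12 S21 C1 C2.
have IC : lie_ideal br C by case: H1 => IA1 IB1 _ _ _; exact: ideal_Cv.
case: H1 => IA1 IB1 sBA1 _ _; case: H2 => IA2 IB2 sBA2 _ _.
have sB1C : (B1 <= C)%VS by rewrite -C1 capvSr.
have sB2C : (B2 <= C)%VS by rewrite -C2 capvSr.
pose f := addv_pi1 A2 C; pose p := addv_pi2 A2 C.
have fE v : v \in A1 -> f v = v - p v.
  move=> Hv; rewrite -{2}(addv_pi1_pi2 (subvP S12 _ Hv)) addrK //.
have fA v : f v \in A2 by exact: memv_pi1.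
have pC v : p v \in C by exact: memv_pi2.
have inB2 w : w \in A2 -> w \in C -> w \in B2.
  by move=> h1 h2; rewrite -C2; apply/memv_capP.
have inB1 w : w \in A1 -> w \in C -> w \in B1.
  by move=> h1 h2; rewrite -C1; apply/memv_capP.
exists f; split.
- by apply/subvP => w /memv_imgP [u _ ->].
- move=> a Ha; apply/idP/idP => h.
    apply: inB1 => //; rewrite -(subrK (p a) a) -fE //.
    apply: memvD => //; exact: (subvP sB2C).
  apply: inB2 => //; rewrite fE //; apply: memvB => //; exact: (subvP sB1C).
- apply/eqP; rewrite eqEsubv subv_add sBA2 andbT; apply/andP; split.
    by apply/subvP => w /memv_imgP [u _ ->].
  apply/subvP => a2 Ha2.
  move: (subvP S21 _ Ha2) => /memv_addP [a1 Ha1 [c Hc' Ea2]].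
  have -> : a2 = f a1 + (a2 - f a1) by rewrite addrC subrK.
  apply: memv_add; first exact: memv_img.
  apply: inB2; first exact: memvB.
  by rewrite fE // Ea2 opprB addrC addrA subrK; apply: memvD.
- move=> x a Ha.
  have Xa : br x a \in A1 by exact: IA1.
  apply: inB2; first by apply: memvB => //; exact: IA2.
  have brB u v : br x (u - v) = br x u - br x v by exact: (linearB (brR HL x)).
  rewrite fE // fE // brB.
  set X := br x a; set P := p X; set Y := br x (p a).
  have -> : X - P - (X - Y) = Y - P by rewrite opprB addrC addrA subrK.
  by apply: memvB; [rewrite /Y; exact: IC | exact: pC].
Qed.

Lemma cent_eq (F : fieldType) (L : vectType F) (br : L -> L -> L)
  (A1 B1 A2 B2 : {vspace L}) :
  (forall x, centraliser br A1 B1 x <-> centraliser br A2 B2 x) ->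
  centraliser br A1 B1 = centraliser br A2 B2.
Proof.
move=> H; apply: functional_extensionality => x.
exact: propositional_extensionality.
Qed.

Theorem theorem2p1 (F : fieldType) (L : vectType F) (br : L -> L -> L)
    (HL : lie_algebra br) (A1 B1 A2 B2 : {vspace L})
    (H1 : chief_factor br A1 B1) (H2 : chief_factor br A2 B2) :
  (L_isomorphic br A1 B1 A2 B2 -> centraliser br A1 B1 = centraliser br A2 B2) /\
  (nonabelian_factor br A1 B1 -> nonabelian_factor br A2 B2 ->
     (L_isomorphic br A1 B1 A2 B2 <-> centraliser br A1 B1 = centraliser br A2 B2)).
Proof.
split.
  by move=> Hi; apply: cent_eq; exact: (iso_cent HL H1 H2 Hi).
move=> N1 N2; split.
  by move=> Hi; apply: cent_eq; exact: (iso_cent HL H1 H2 Hi).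
move=> Hc; apply: (cent_iso HL H1 H2 N1 N2) => x; by rewrite Hc.
Qed.
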